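(* Let $A\in\mathbb{R}^{n\times n}$ be symmetric positive definite, $M_0\in\mathbb{R}^{n\times n}$, and let $(M_i,R_i,G_i,P_i)$ be the NCG sequence defined in the context (assumed not to break down). Then for $i=1,2,\dots$, $$M_i\in M_0+\mathcal{K}_i(A^2,G_0)\quad\text{and}\quad R_i=I_n-AM_i\perp\mathcal{K}_i(A^2,G_0),$$ where $\mathcal{K}_i(A^2,G_0)=\mathrm{span}\{G_0,A^2G_0,\dots,A^{2(i-1)}G_0\}$ and $G_0=-AR_0$. Moreover, the search directions $P_0,\dots,P_{i-1}$ form an $A$-orthogonal basis (i.e. $(P_j,AP_k)_F=0$ for $j\neq k$) of this Krylov subspace, and $$\mathrm{span}\{P_0,\dots,P_{i-1}\}=\mathrm{span}\{G_0,\dots,G_{i-1}\}=\mathcal{K}_i(A^2,G_0).$$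
   Context: The Frobenius inner product on $\mathbb{R}^{n\times n}$ is $(X,Y)_F=\operatorname{tr}(X^TY)$; orthogonality $\perp$ is with respect to it. The NCG method: given $M_0$, set $R_i:=I_n-AM_i$ and $G_i:=-AR_i$, $P_0:=-G_0$. For $i\ge1$, $P_i$ is the element of $-G_i+\mathrm{span}\{P_{i-1}\}$ with $(P_i,AP_{i-1})_F=0$. For $i\ge0$, $M_{i+1}$ is the element of $M_i+\mathrm{span}\{P_i\}$ such that $(I_n-AM_{i+1},P_i)_F=0$. It is assumed that the iteration does not break down ($R_i\neq0$, $P_i\neq0$ for all indices considered), so that the iterates are uniquely determined. *)

(* Defs.v *)
From HB Require Import structures.
From mathcomp Require Import all_boot all_order all_algebra.
Set Implicit Arguments. Unset Strict Implicit. Unset Printing Implicit Defensive.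
Import Order.TTheory GRing.Theory Num.Theory.
Local Open Scope ring_scope.

Section NCG.
Variables (R : realFieldType) (n : nat).

Definition frob (X Y : 'M[R]_n) : R := \tr (X^T *m Y).

Definition spd (A : 'M[R]_n) : Prop :=
  A^T = A /\ forall x : 'cV[R]_n, x != 0 -> 0 < (x^T *m A *m x) 0 0.

Definition resid (A M : 'M[R]_n) : 'M[R]_n := 1%:M - A *m M.
Definition grad (A M : 'M[R]_n) : 'M[R]_n := - (A *m resid A M).

Definition is_NCG (A : 'M[R]_n) (M P : nat -> 'M[R]_n) : Prop :=
  [/\ P 0%N = - grad A (M 0%N),
      (forall i, exists beta : R,
          P i.+1 = - grad A (M i.+1) + beta *: P i
          /\ frob (P i.+1) (A *m P i) = 0)
    & (forall i, exists alpha : R,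
          M i.+1 = M i + alpha *: P i
          /\ frob (resid A (M i.+1)) (P i) = 0)].

Definition krylov (i : nat) (B G : 'M[R]_n) : {vspace 'M[R]_n} :=
  <<[seq B ^+ k *m G | k <- iota 0 i]>>%VS.

End NCG.

(* Main.v *)
Require Import Defs.
From HB Require Import structures.
From mathcomp Require Import all_boot all_order all_algebra.
Import Order.TTheory GRing.Theory Num.Theory.
Local Open Scope ring_scope.

Set Implicit Arguments. Unset Strict Implicit.
Section Aux.
Variables (R : realFieldType) (n : nat).
Implicit Types (X Y Z : 'M[R]_n).

Lemma frobC X Y : frob X Y = frob Y X.
Proof. by rewrite /frob -mxtrace_tr trmx_mul trmxK. Qed.

Lemma frobDr X Y Z : frob X (Y + Z) = frob X Y + frob X Z.
Proof. by rewrite /frob mulmxDr mxtraceD. Qed.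
Lemma frobZr a X Y : frob X (a *: Y) = a * frob X Y.
Proof. by rewrite /frob -scalemxAr mxtraceZ. Qed.
Lemma frobNr X Y : frob X (- Y) = - frob X Y.
Proof. by rewrite /frob mulmxN raddfN. Qed.
Lemma frobBr X Y Z : frob X (Y - Z) = frob X Y - frob X Z.
Proof. by rewrite frobDr frobNr. Qed.
Lemma frobDl X Y Z : frob (Y + Z) X = frob Y X + frob Z X.
Proof. by rewrite !(frobC _ X) frobDr. Qed.
Lemma frobZl a X Y : frob (a *: Y) X = a * frob Y X.
Proof. by rewrite !(frobC _ X) frobZr. Qed.
Lemma frobNl X Y : frob (- Y) X = - frob Y X.
Proof. by rewrite !(frobC _ X) frobNr. Qed.
Lemma frobBl X Y Z : frob (Y - Z) X = frob Y X - frob Z X.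
Proof. by rewrite frobDl frobNl. Qed.

Lemma frob_sumr X m (c : 'I_m -> R) (F : 'I_m -> 'M[R]_n) :
  frob X (\sum_i c i *: F i) = \sum_i c i * frob X (F i).
Proof.
rewrite /frob mulmx_sumr raddf_sum; apply: eq_bigr => i _.
by rewrite -scalemxAr; apply: mxtraceZ.
Qed.

Lemma orth_span Y (s : seq 'M[R]_n) :
  (forall x, x \in s -> frob Y x = 0) ->
  forall v, (v \in <<s>>)%VS -> frob Y v = 0.
Proof.
move=> H v /(@coord_span _ _ _ (in_tuple s)) ->.
rewrite frob_sumr big1 // => i _; rewrite H ?mulr0 //.
by apply: mem_nth; rewrite ltn_ord.
Qed.

Lemma span_mul (B : 'M[R]_n) (s : seq 'M[R]_n) (U : {vspace 'M[R]_n}) :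
  (forall x, x \in s -> (B *m x \in U)%VS) ->
  forall v, (v \in <<s>>)%VS -> (B *m v \in U)%VS.
Proof.
move=> H v /(@coord_span _ _ _ (in_tuple s)) ->.
rewrite mulmx_sumr; apply: memv_suml => i _; rewrite -scalemxAr.
by apply/memvZ/H/mem_nth; rewrite ltn_ord.
Qed.

Definition spn (f : nat -> 'M[R]_n) k : {vspace 'M[R]_n} :=
  <<[seq f j | j <- iota 0 k]>>%VS.

Lemma spn_mem f k j : (j < k)%N -> (f j \in spn f k)%VS.
Proof. by move=> jk; apply/memv_span/map_f; rewrite mem_iota. Qed.

Lemma spn_sub f k (U : {vspace 'M[R]_n}) : (forall j, (j < k)%N -> (f j \in U)%VS) -> (spn f k <= U)%VS.
Proof.
move=> H; apply/span_subvP => x /mapP[j]; rewrite mem_iota add0n => /andP[_ jk] ->.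
exact: H.
Qed.

Lemma spn_mon f k k' : (k <= k')%N -> (spn f k <= spn f k')%VS.
Proof. by move=> kk; apply: spn_sub => j jk; apply: spn_mem; apply: leq_trans kk. Qed.

Lemma spn_dim f k : (\dim (spn f k) <= k)%N.
Proof. by have := dim_span [seq f j | j <- iota 0 k]; rewrite size_map size_iota. Qed.

Lemma quad_ge0 (A : 'M[R]_n) (x : 'cV[R]_n) : spd A -> 0 <= (x^T *m A *m x) 0 0.
Proof.
move=> [_ HA]; have [->|nz] := eqVneq x 0; last by apply/ltW/HA.
by rewrite mulmx0 mxE.
Qed.

Lemma frob_pos (A : 'M[R]_n) X : spd A -> X != 0 -> 0 < frob X (A *m X).
Proof.
move=> HA nz.
have E : forall i, (X^T *m (A *m X)) i i = ((col i X)^T *m A *m col i X) 0 0.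
  move=> i; rewrite mulmxA !mxE; apply: eq_bigr => j _; rewrite !mxE.
  by congr (_ * _); apply: eq_bigr => k _; rewrite !mxE.
have [i Hi] : exists i, col i X != 0.
  case: (pickP (fun i => col i X != 0)) => [i Hi|H]; first by exists i.
  case/negP: nz; apply/eqP/matrixP => a b; move/negbFE/eqP: (H b).
  by move/matrixP/(_ a 0); rewrite !mxE.
rewrite /frob /mxtrace (bigD1 i) //= E.
apply: ltr_pwDl; first by case: HA => _ HA; apply: HA.
by apply: sumr_ge0 => j _; rewrite E quad_ge0.
Qed.
End Aux.

Section Main.
Variables (R : realFieldType) (n : nat) (A : 'M[R]_n) (M P : nat -> 'M[R]_n).
Hypothesis HA : spd A.
Hypothesis HN : is_NCG A M P.

Local Notation G j := (grad A (M j)).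
Local Notation B := (A *m A).
Local Notation K k := (krylov k B (G 0%N)).

Lemma frobA X Y : frob (A *m X) Y = frob X (A *m Y).
Proof. by rewrite /frob trmx_mul HA.1 mulmxA. Qed.

Lemma frob_symA X Y : frob X (A *m Y) = frob Y (A *m X).
Proof. by rewrite frobC frobA. Qed.

Lemma K_spn k : K k = spn (fun j => B ^+ j *m G 0%N) k.
Proof. by []. Qed.

Lemma K_mon k k' : (k <= k')%N -> (K k <= K k')%VS.
Proof. by move=> h; rewrite !K_spn; apply: spn_mon. Qed.

Lemma K_G0 k : (G 0%N \in K k.+1)%VS.
Proof.
rewrite K_spn; have := @spn_mem _ _ (fun j => B ^+ j *m G 0%N) k.+1 0 isT.
by rewrite expr0 mul1mx.
Qed.

Lemma K_B k v : (v \in K k)%VS -> (B *m v \in K k.+1)%VS.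
Proof.
apply: span_mul => x /mapP[j]; rewrite mem_iota add0n => /andP[_ jk] ->.
rewrite K_spn mulmxA (_ : B *m B ^+ j = B ^+ j.+1); last by rewrite exprS.
exact: (@spn_mem _ _ (fun j => B ^+ j *m G 0%N)).
Qed.

Lemma G_eq k : G k = G 0%N + B *m (M k - M 0%N).
Proof.
rewrite /grad /resid !mulmxBr !mulmx1 !mulmxA !opprB.
by rewrite [RHS]addrC addrA subrK.
Qed.

Lemma resid_step k alpha : M k.+1 = M k + alpha *: P k ->
  resid A (M k.+1) = resid A (M k) - alpha *: (A *m P k).
Proof.
by move=> ->; rewrite /resid mulmxDr -scalemxAr opprD addrA.
Qed.

Lemma L1 k : (M k - M 0%N \in K k)%VS /\ (P k \in K k.+1)%VS.
Proof.
case: HN => HP0 HP HM.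
elim: k => [|k [IHm IHp]].
  by rewrite subrr mem0v; split=> //; rewrite HP0 memvN; apply: K_G0.
have Hm : (M k.+1 - M 0%N \in K k.+1)%VS.
  have [alpha [-> _]] := HM k.
  rewrite addrAC; apply: memvD; last exact: memvZ.
  by apply: (subvP (K_mon (leqnSn k))).
split=> //.
have [beta [-> _]] := HP k.
apply: memvD; last first.
  by apply: memvZ; apply: (subvP (K_mon (leqnSn k.+1))).
rewrite memvN G_eq; apply: memvD; first exact: K_G0.
exact: K_B.
Qed.

Lemma G_K k : (G k \in K k.+1)%VS.
Proof. by rewrite G_eq; apply: memvD; [apply: K_G0 | apply: K_B; case: (L1 k)]. Qed.

Lemma P_spnG k : (P k \in spn (fun j => G j) k.+1)%VS.
Proof.
case: HN => HP0 HP _.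
elim: k => [|k IH]; first by rewrite HP0 memvN; apply: (@spn_mem _ _ (fun j => G j)).
have [beta [-> _]] := HP k.
apply: memvD; first by rewrite memvN; apply: (@spn_mem _ _ (fun j => G j)).
by apply: memvZ; apply: (subvP (spn_mon _ (leqnSn k.+1))).
Qed.

Lemma P_free k : (forall j, (j < k)%N -> P j != 0) ->
  (forall j l, (j < k)%N -> (l < k)%N -> j != l -> frob (P j) (A *m P l) = 0) ->
  free [seq P j | j <- iota 0 k].
Proof.
move=> nz cj; set s := [seq P j | j <- iota 0 k].
have sz : size s = k by rewrite size_map size_iota.
have nth_s : forall l, (l < k)%N -> s`_l = P l.
  by move=> l lk; rewrite (nth_map 0%N) ?size_iota // nth_iota.
suff : free (in_tuple s) by [].
apply/freeP => c Hc i.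
have ik : (i < k)%N by rewrite -sz ltn_ord.
have := congr1 (fun Y => frob (s`_i) (A *m Y)) Hc => /=.
rewrite mulmx0 /frob mulmx0 mxtrace0 -/(frob _ _) mulmx_sumr.
under eq_bigr do rewrite -scalemxAr.
rewrite frob_sumr (bigD1 i) //= big1 ?addr0; last first.
  move=> j ji; have jk : (j < k)%N by rewrite -sz ltn_ord.
  rewrite !nth_s // cj ?mulr0 //; by rewrite eq_sym.
move/eqP; rewrite mulf_eq0 => /orP[/eqP //|].
rewrite nth_s // => /eqP E; have := frob_pos HA (nz _ ik).
by rewrite E ltxx.
Qed.

Lemma spnP_K k : (forall j, (j < k)%N -> P j != 0) ->
  (forall j l, (j < k)%N -> (l < k)%N -> j != l -> frob (P j) (A *m P l) = 0) ->
  spn P k = K k.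
Proof.
move=> nz cj; apply/eqP; rewrite eqEdim; apply/andP; split.
  apply: spn_sub => j jk; apply: (subvP (K_mon jk)); by case: (L1 j).
have /eqnP -> := P_free nz cj.
by rewrite size_map size_iota K_spn spn_dim.
Qed.

Lemma main i : (forall j, (j < i)%N -> P j != 0) -> forall k, (k <= i)%N ->
  (forall j, (j < k)%N -> frob (resid A (M k)) (P j) = 0) /\
  (forall j l, (j <= k)%N -> (l <= k)%N -> j != l -> frob (P j) (A *m P l) = 0).
Proof.
move=> nz; elim=> [_|k IH ki].
  by split=> // j l; rewrite !leqn0 => /eqP-> /eqP->; rewrite eqxx.
have [IHr IHc] := IH (ltnW ki).
case: HN => _ HP HM.
have [alpha [Hm Hr]] := HM k.
have [beta [Hp Hc]] := HP k.
have orth : forall j, (j < k.+1)%N -> frob (resid A (M k.+1)) (P j) = 0.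
  move=> j; rewrite ltnS leq_eqVlt => /orP[/eqP->|jk]; first exact: Hr.
  rewrite (resid_step Hm) frobBl frobZl frobA IHr // IHc ?(ltnW jk) //.
    by rewrite mulr0 subrr.
  by rewrite neq_ltn jk orbT.
split=> //.
have Sk : spn P k.+1 = K k.+1.
  apply: spnP_K => [j jk|j l jk lk]; first by apply: nz; apply: leq_trans ki.
  exact: IHc.
have key : forall j, (j <= k)%N -> frob (P k.+1) (A *m P j) = 0.
  move=> j; rewrite leq_eqVlt => /orP[/eqP->|jk]; first exact: Hc.
  have HB : (B *m P j \in spn P k.+1)%VS.
    by rewrite Sk; apply: (subvP (K_mon (jk : (j.+2 <= k.+1)%N))); apply: K_B; case: (L1 j).
  have H1 : forall x, x \in [seq P j | j <- iota 0 k.+1] ->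
      frob (resid A (M k.+1)) x = 0.
    by move=> x /mapP[l]; rewrite mem_iota add0n => /andP[_ lk] ->; apply: orth.
  rewrite Hp frobDl frobZl /grad !frobNl opprK frobA mulmxA (orth_span H1 HB).
  rewrite add0r IHc ?mulr0 ?(ltnW jk) //.
  by rewrite neq_ltn jk orbT.
move=> j l; rewrite leq_eqVlt => /orP[/eqP->|jk]; rewrite leq_eqVlt => /orP[/eqP->|lk].
- by rewrite eqxx.
- by move=> _; apply: key.
- by move=> _; rewrite frob_symA; apply: key.
- exact: IHc.
Qed.
End Main.

Unset Implicit Arguments. Set Strict Implicit.

Theorem proposition2 (R : realFieldType) (n : nat) (A : 'M[R]_n)
    (M P : nat -> 'M[R]_n) :
  spd A -> is_NCG A M P ->
  forall i : nat, (0 < i)%N ->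
  (* no breakdown at the indices considered *)
  (forall j : nat, (j < i)%N -> resid A (M j) != 0 /\ P j != 0) ->
  let K := krylov i (A *m A) (grad A (M 0%N)) in
  [/\ (M i - M 0%N \in K)%VS,
      (forall X : 'M[R]_n, (X \in K)%VS -> frob (resid A (M i)) X = 0),
      (forall j k : nat, (j < i)%N -> (k < i)%N -> j != k ->
          frob (P j) (A *m P k) = 0),
      basis_of K [seq P j | j <- iota 0 i]
    & (<<[seq P j | j <- iota 0 i]>>%VS = K
       /\ <<[seq grad A (M j) | j <- iota 0 i]>>%VS = K)].
Proof.
move=> HA HN i i0 nzr K.
have nz : forall j, (j < i)%N -> P j != 0 by move=> j /nzr [].
have [Hr Hc] := main HA HN nz (leqnn i).
have cj : forall j l, (j < i)%N -> (l < i)%N -> j != l -> frob (P j) (A *m P l) = 0.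
  by move=> j l ji li; apply: Hc; apply: ltnW.
have Hfree := P_free HA nz cj.
have SK : spn P i = K := spnP_K HA HN nz cj.
split.
- by case: (L1 HN i).
- move=> X; rewrite -SK; apply: orth_span => x /mapP[j]; rewrite mem_iota add0n.
  by move=> /andP[_ ji] ->; apply: Hr.
- exact: cj.
- by rewrite /basis_of; change ((spn P i == K) && free [seq P j | j <- iota 0 i]); rewrite SK eqxx Hfree.
- split; first exact: SK.
  change (spn (fun j => grad A (M j)) i = K).
  apply/eqP; rewrite eqEsubv; apply/andP; split.
    apply: spn_sub => j ji; apply: (subvP (K_mon A M ji)); exact: G_K HN j.
  rewrite -SK; apply: spn_sub => j ji; apply: (subvP (spn_mon _ ji)); exact: P_spnG HN j.
Qed.
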